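(* Let $\mathcal{O}=(O_1,\ldots,O_n)$ be a chain and $2\le i\le n$. Let $r_i,r_{i-1}$ be the radii and $o_i,o_{i-1}$ the centers of $O_i,O_{i-1}$. Then $H_i=||o_io_{i-1}||$ and $V_i\ge|r_i-r_{i-1}|$.
   Context: All objects lie in the Euclidean plane; a ''circle'' means a closed disk; $||pq||$ is Euclidean distance. Chain. A sequence of distinct finite closed disks $(O_1,\ldots,O_n)$ is a chain if: (1) every two consecutive disks $O_i,O_{i+1}$ intersect; let $a_i,b_i$ be the common points of their boundary circles ($a_i=b_i$ if tangent), labelled so that all the $a_i$ lie on one side of the chain and all the $b_i$ on the other. Let $C_i^{(i+1)}$ be the arc of the boundary of $O_i$ lying in $O_{i+1}$ and $C_{i+1}^{(i)}$ the arc of the boundary of $O_{i+1}$ lying in $O_i$. (2) For $2\le i\le n-1$, the arcs $C_i^{(i-1)}$ and $C_i^{(i+1)}$ share no point other than a boundary point. For $2\le i\le n$, choose coordinates in which $o_{i-1},o_i$ lie on a horizontal line and $a_{i-1}$ is on or above that line. Let $q_{i-1}^{\rightarrow}$ (resp. $q_i^{\leftarrow}$) be the point of the upper boundary of $O_{i-1}$ (resp. $O_i$) farthest from the line $o_{i-1}o_i$. Let $Q_{i-1}^{\rightarrow}$ be the upper arc of the boundary of $O_{i-1}$ between $q_{i-1}^{\rightarrow}$ and $a_{i-1}$, and $Q_i^{\leftarrow}$ the upper arc of the boundary of $O_i$ between $q_i^{\leftarrow}$ and $a_{i-1}$. $Q_{i-1}^{\rightarrow}$ is colored red if it lies inside $O_i$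 and green otherwise; $Q_i^{\leftarrow}$ is red if it lies inside $O_{i-1}$ and green otherwise. Let $\mathcal{P}_i$ be the path from $q_{i-1}^{\rightarrow}$ to $q_i^{\leftarrow}$ formed by $Q_{i-1}^{\rightarrow}$ and $Q_i^{\leftarrow}$. $H_i$ (resp. $V_i$) is the horizontal (resp. vertical) distance traveled along $\mathcal{P}_i$, green arcs contributing positively and red arcs negatively. *)

(* Defs.v *)
From HB Require Import structures.
From mathcomp Require Import all_boot all_order all_algebra.
From mathcomp Require Import all_classical all_reals all_analysis.
Set Implicit Arguments. Unset Strict Implicit. Unset Printing Implicit Defensive.
Import Order.TTheory GRing.Theory Num.Theory.
Local Open Scope ring_scope.

Section Geo.
Variable R : realType.

Definition pt := (R * R)%type.
Definition padd (p q : pt) : pt := (p.1 + q.1, p.2 + q.2).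
Definition psub (p q : pt) : pt := (p.1 - q.1, p.2 - q.2).
Definition pscale (k : R) (p : pt) : pt := (k * p.1, k * p.2).
Definition dot (p q : pt) : R := p.1 * q.1 + p.2 * q.2.
Definition pdist (p q : pt) : R := Num.sqrt (dot (psub p q) (psub p q)).

Record disk := Disk { dcenter : pt ; dradius : R }.
Definition in_disk (O : disk) (p : pt) : Prop := pdist p (dcenter O) <= dradius O.
Definition on_bd (O : disk) (p : pt) : Prop := pdist p (dcenter O) = dradius O.

Definition arcC (Oi Oj : disk) (p : pt) : Prop := on_bd Oi p /\ in_disk Oj p.

Definition is_chain (n : nat) (O : nat -> disk) (a b : nat -> pt) : Prop :=
  (forall i, (1 <= i <= n)%N -> 0 < dradius (O i)) /\
  (forall i j, (1 <= i <= n)%N -> (1 <= j <= n)%N -> O i = O j -> i = j) /\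
  (forall i, (1 <= i < n)%N ->
     (exists p, in_disk (O i) p /\ in_disk (O i.+1) p) /\
     on_bd (O i) (a i) /\ on_bd (O i.+1) (a i) /\
     on_bd (O i) (b i) /\ on_bd (O i.+1) (b i) /\
     (forall p, on_bd (O i) p -> on_bd (O i.+1) p -> p = a i \/ p = b i)) /\
  (forall i, (2 <= i <= n.-1)%N -> forall p,
     arcC (O i) (O i.-1) p -> arcC (O i) (O i.+1) p ->
     on_bd (O i.-1) p \/ on_bd (O i.+1) p).

(* Coordinates: an orthonormal frame (u horizontal, w vertical) in which
   o1, o2 lie on a horizontal line and a is on or above that line. *)
Definition valid_frame (o1 o2 a u w : pt) : Prop :=
  (u = pscale (pdist o2 o1)^-1 (psub o2 o1) \/
   u = pscale (- (pdist o2 o1)^-1) (psub o2 o1)) /\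
  dot w w = 1 /\ dot u w = 0 /\ 0 <= dot (psub a o1) w.

(* upper boundary of the disk O, parametrized by t in [0, pi] *)
Definition arc_pt (O : disk) (u w : pt) (t : R) : pt :=
  padd (dcenter O) (padd (pscale (dradius O * cos t) u) (pscale (dradius O * sin t) w)).

(* parameter of a point p of the upper boundary of O *)
Definition ang (O : disk) (u : pt) (p : pt) : R :=
  acos (dot (psub p (dcenter O)) u / dradius O).

(* the arc Q of the upper boundary of O between its topmost point (parameter
   pi/2) and p corresponds to parameters in [qlo, qhi] *)
Definition qlo (O : disk) (u p : pt) : R := Num.min (pi / 2) (ang O u p).
Definition qhi (O : disk) (u p : pt) : R := Num.max (pi / 2) (ang O u p).

Definition red (O O' : disk) (u w p : pt) : Prop :=
  forall t, qlo O u p <= t <= qhi O u p -> in_disk O' (arc_pt O u w t).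

(* distance traveled along Q in direction e (total variation of the
   e-coordinate along the arc) *)
Definition travel (O : disk) (u w p e : pt) : \bar R :=
  total_variation (qlo O u p) (qhi O u p) (fun t => dot (arc_pt O u w t) e).

Definition contrib (O O' : disk) (u w p e : pt) : \bar R :=
  if `[< red O O' u w p >] then (- travel O u w p e)%E else travel O u w p e.

(* H_i and V_i for the pair (O_{i-1}, O_i) with a = a_{i-1}:
   path formed by Q_{i-1}^-> (on O_{i-1}) and Q_i^<- (on O_i) *)
Definition Hval (Oprev Ocur : disk) (u w a : pt) : \bar R :=
  (contrib Oprev Ocur u w a u + contrib Ocur Oprev u w a u)%E.
Definition Vval (Oprev Ocur : disk) (u w a : pt) : \bar R :=
  (contrib Oprev Ocur u w a w + contrib Ocur Oprev u w a w)%E.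

End Geo.

(* Main.v *)
Require Import Defs.
From HB Require Import structures.
From mathcomp Require Import all_boot all_order all_algebra.
From mathcomp Require Import all_classical all_reals all_analysis.
From mathcomp Require Import ring lra zify.
Import Order.TTheory GRing.Theory Num.Theory.
Local Open Scope ring_scope.
Section H.
Variable R : realType.

Lemma dot_decomp (u w v : pt R) : dot u u = 1 -> dot w w = 1 -> dot u w = 0 ->
  dot v v = (dot v u)^+2 + (dot v w)^+2.
Proof.
case: u => u1 u2; case: w => w1 w2; case: v => v1 v2; rewrite /dot /= => hu hw huw.
set k := u1 * w2 - u2 * w1.
have hk : k ^+ 2 = 1.
  have -> : k ^+ 2 = (u1*u1+u2*u2)*(w1*w1+w2*w2) - (u1*w1+u2*w2)^+2 by rewrite /k; ring.
  by rewrite hu hw huw; ring.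
have e2 : w2 = k * u1.
  have -> : k * u1 = u1 * u1 * w2 - u1 * u2 * w1 by rewrite /k; ring.
  have h1 : u1 * w1 = - (u2 * w2) by lra.
  have -> : u1 * u2 * w1 = - (u2 * u2 * w2) by rewrite -mulrA (mulrC u2) mulrA h1; ring.
  have : w2 = (u1*u1+u2*u2) * w2 by rewrite hu mul1r.
  move=> {1}->; ring.
have e1 : w1 = - k * u2.
  have -> : - k * u2 = u2 * u2 * w1 - u1 * u2 * w2 by rewrite /k; ring.
  have h1 : u2 * w2 = - (u1 * w1) by lra.
  have -> : u1 * u2 * w2 = - (u1 * u1 * w1) by rewrite -mulrA h1; ring.
  have : w1 = (u1*u1+u2*u2) * w1 by rewrite hu mul1r.
  move=> {1}->; ring.
rewrite e1 e2.
have -> : (v1 * u1 + v2 * u2) ^+ 2 + (v1 * (- k * u2) + v2 * (k * u1)) ^+ 2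
  = (v1 * u1 + v2 * u2) ^+ 2 + k^+2 * (v2 * u1 - v1 * u2) ^+ 2 by ring.
rewrite hk mul1r.
have -> : (v1 * u1 + v2 * u2) ^+ 2 + (v2 * u1 - v1 * u2) ^+ 2 = (v1*v1+v2*v2)*(u1*u1+u2*u2) by ring.
by rewrite hu mulr1.
Qed.


Definition mono_on (a b : R) (f : R -> R) :=
  (forall x y, a <= x -> x <= y -> y <= b -> f x <= f y) \/
  (forall x y, a <= x -> x <= y -> y <= b -> f y <= f x).

Lemma tv_mono a b f : a <= b -> mono_on a b f ->
  total_variation a b f = `|f b - f a|%:E.
Proof.
move=> ab [h|h].
  rewrite nondecreasing_total_variation //; last first.
    by move=> x y /[!in_itv] /= /andP[ax xb] /andP[ay yb] xy; apply: h.
  by rewrite ger0_norm // subr_ge0; apply: h.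
rewrite -total_variationN nondecreasing_total_variation //; last first.
  move=> x y /[!in_itv] /= /andP[ax xb] /andP[ay yb] xy.
  by rewrite lerN2; apply: h.
rewrite ler0_norm; last by rewrite subr_le0; apply: h.
by rewrite opprB /= opprK addrC.
Qed.

Lemma mono_affine a b g K k : mono_on a b g -> mono_on a b (fun t => K + k * g t).
Proof.
move=> [h|h]; have [k0|k0] := lerP 0 k.
- by left=> x y ax xy yb; rewrite lerD2l ler_wpM2l // h.
- by right=> x y ax xy yb; rewrite lerD2l ler_wnM2l ?h // ltW.
- by right=> x y ax xy yb; rewrite lerD2l ler_wpM2l // h.
- by left=> x y ax xy yb; rewrite lerD2l ler_wnM2l ?h // ltW.
Qed.

Lemma cos_noninc x y : 0 <= x -> x <= y -> y <= pi -> cos y <= cos x :> R.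
Proof.
move=> x0 xy ypi; rewrite le_eqVlt in xy; case/predU1P: xy => [->//|xy].
have hx : x \in `[0, pi] by rewrite in_itv /=; apply/andP; split; lra.
have hy : y \in `[0, pi] by rewrite in_itv /=; apply/andP; split; lra.
by apply: ltW; rewrite ltr_cos.
Qed.

Lemma pihalf_ge0 : 0 <= pi / 2 :> R.
Proof. by rewrite divr_ge0 // pi_ge0. Qed.

Lemma pihalf_le : pi / 2 <= pi :> R.
Proof. have := @pi_ge0 R; lra. Qed.

Lemma mono_cos lo hi : 0 <= lo -> hi <= pi -> mono_on lo hi (@cos R).
Proof.
move=> l0 hp; right=> x y lx xy yh; apply: cos_noninc => //; lra.
Qed.

Lemma mono_sin th : 0 <= th <= pi ->
  mono_on (Num.min (pi/2) th) (Num.max (pi/2) th) (@sin R).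
Proof.
move=> /andP[t0 tp]; have hp := @pihalf_ge0; have hp2 := @pihalf_le.
have [th2|th2] := lerP th (pi/2); idtac.
  left=> x y lx xy yh; rewrite le_eqVlt in xy; case/predU1P: xy => [->//|xy].
  apply: ltW; rewrite ltr_sin // in_itv /=; apply/andP; split; lra.
right=> x y lx xy yh; rewrite -!cosBpihalf; apply: cos_noninc; lra.
Qed.

Lemma in_minmax (th : R) : Num.min (pi/2) th <= pi/2 <= Num.max (pi/2) th.
Proof. by rewrite ge_min lexx /= le_max lexx. Qed.

Lemma dotBl (p q e : pt R) : dot (psub p q) e = dot p e - dot q e.
Proof. by case: p => ? ?; case: q => ? ?; case: e => ? ?; rewrite /dot /=; ring. Qed.

Lemma dotC (p q : pt R) : dot p q = dot q p.
Proof. by case: p => ? ?; case: q => ? ?; rewrite /dot /=; ring. Qed.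

Lemma arc_u (O : disk R) (u w : pt R) t : dot u u = 1 -> dot u w = 0 ->
  dot (arc_pt O u w t) u = dot (dcenter O) u + dradius O * cos t.
Proof.
case: u => u1 u2; case: w => w1 w2; case: O => c r; case: c => o1 o2.
rewrite /dot /arc_pt /padd /pscale /= => h1 h2.
transitivity (o1 * u1 + o2 * u2 + r * cos t * (u1 * u1 + u2 * u2) + r * sin t * (u1 * w1 + u2 * w2)); first ring.
by rewrite h1 h2; ring.
Qed.

Lemma arc_w (O : disk R) (u w : pt R) t : dot w w = 1 -> dot u w = 0 ->
  dot (arc_pt O u w t) w = dot (dcenter O) w + dradius O * sin t.
Proof.
case: u => u1 u2; case: w => w1 w2; case: O => c r; case: c => o1 o2.
rewrite /dot /arc_pt /padd /pscale /= => h1 h2.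
transitivity (o1 * w1 + o2 * w2 + r * cos t * (u1 * w1 + u2 * w2) + r * sin t * (w1 * w1 + w2 * w2)); first ring.
by rewrite h1 h2; ring.
Qed.

Lemma dist_le_coord (u w : pt R) (p q : pt R) r : dot u u = 1 -> dot w w = 1 -> dot u w = 0 ->
  0 <= r -> (pdist p q <= r) <-> ((dot p u - dot q u)^+2 + (dot p w - dot q w)^+2 <= r^+2).
Proof.
move=> hu hw huw r0; rewrite /pdist -!dotBl -(dot_decomp _ _ _ hu hw huw).
by rewrite -{1}(ger0_norm r0) -sqrtr_sqr ler_sqrt ?sqr_ge0.
Qed.

Lemma dist_eq_coord (u w : pt R) (p q : pt R) r : dot u u = 1 -> dot w w = 1 -> dot u w = 0 ->
  pdist p q = r -> ((dot p u - dot q u)^+2 + (dot p w - dot q w)^+2 = r^+2).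
Proof.
move=> hu hw huw <-; rewrite /pdist sqr_sqrtr; last first.
  by rewrite (dot_decomp _ _ _ hu hw huw) addr_ge0 // sqr_ge0.
by rewrite (dot_decomp _ _ _ hu hw huw) !dotBl.
Qed.
Lemma sq_bounds (X Y r : R) : 0 < r -> 0 <= Y -> X^+2 + Y^+2 = r^+2 ->
  Y <= r /\ -r <= X <= r.
Proof. move=> r0 hY h; split; first nra. apply/andP; split; nra. Qed.

Lemma disk_facts (O : disk R) (u w A : pt R) :
  dot u u = 1 -> dot w w = 1 -> dot u w = 0 -> 0 < dradius O -> on_bd O A ->
  0 <= dot (psub A (dcenter O)) w ->
  [/\ (dot (psub A (dcenter O)) u)^+2 + (dot (psub A (dcenter O)) w)^+2 = dradius O ^+2,
      travel O u w A u = `|dot (psub A (dcenter O)) u|%:E,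
      travel O u w A w = (dradius O - dot (psub A (dcenter O)) w)%:E,
      dot (psub A (dcenter O)) w <= dradius O &
      (forall t, qlo O u A <= t <= qhi O u A ->
         (0 <= dradius O * cos t <= dot (psub A (dcenter O)) u) \/
         (dot (psub A (dcenter O)) u <= dradius O * cos t <= 0))].
Proof.
move=> hu hw huw r0 hA hY.
set X := dot (psub A (dcenter O)) u; set Y := dot (psub A (dcenter O)) w.
set r := dradius O.
have r0' : 0 < r := r0. clear r0; rename r0' into r0.
have hY' : 0 <= Y := hY. clear hY; rename hY' into hY.
have hXY : X^+2 + Y^+2 = r^+2.
  by rewrite /X /Y !dotBl; apply: dist_eq_coord.
have [hYr hXr] := sq_bounds _ _ _ r0 hY hXY.
have rn0 : r != 0 by rewrite gt_eqF.
set c := X / r.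
have hXc : X = c * r by rewrite /c divfK.
have hc : -1 <= c <= 1.
  by apply/andP; split; rewrite -(ler_pM2r r0); rewrite -hXc; lra.
have hang : ang O u A = acos c by [].
set th := acos c.
have th0 : 0 <= th by apply: acos_ge0.
have thp : th <= pi by apply: acos_lepi.
have hcos : cos th = c by apply: acosK; rewrite in_itv.
have hsin0 : 0 <= sin th by apply: sin_ge0_pi; rewrite th0 thp.
have hsin : r * sin th = Y.
  have e : (r * sin th)^+2 = Y^+2.
    have := cos2Dsin2 th; rewrite hcos => h.
    have -> : (r * sin th)^+2 = r^+2 * (1 - c^+2) by rewrite -h; ring.
    have hY2 : Y^+2 = r^+2 - X^+2 by rewrite -hXY; ring.
    by rewrite hY2 hXc; ring.
  rewrite -(ger0_norm (mulr_ge0 (ltW r0) hsin0)) -(ger0_norm hY) -!sqrtr_sqr e //.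
have hmid : qlo O u A <= pi/2 <= qhi O u A by apply: in_minmax.
have hlo : 0 <= qlo O u A by rewrite /qlo le_min pihalf_ge0.
have hhi : qhi O u A <= pi by rewrite /qhi ge_max pihalf_le.
have hlh : qlo O u A <= qhi O u A by case/andP: hmid; apply: le_trans.
split => //.
- rewrite /travel.
  have -> : (fun t => dot (arc_pt O u w t) u) = (fun t => dot (dcenter O) u + r * cos t).
    by apply/funext => t; rewrite arc_u.
  rewrite tv_mono //; last by apply: mono_affine; apply: mono_cos.
  congr (_%:E); rewrite /qlo /qhi hang -/th.
  have := cos_pihalf R => cp.
  case: (lerP th (pi/2)) => _; rewrite cp hcos hXc.
    by rewrite -normrN; congr (`|_|); ring.
  by congr (`|_|); ring.
- rewrite /travel.
  have -> : (fun t => dot (arc_pt O u w t) w) = (fun t => dot (dcenter O) w + r * sin t).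
    by apply/funext => t; rewrite arc_w.
  rewrite tv_mono //; last by apply: mono_affine; apply: mono_sin; rewrite th0 thp.
  congr (_%:E); rewrite /qlo /qhi hang -/th.
  have := sin_pihalf R => sp.
  case: (lerP th (pi/2)) => _; rewrite sp.
    rewrite ger0_norm; first lra.
    lra.
  rewrite ler0_norm; first lra.
  lra.
- move=> t /andP[lt th']; move: lt th'.
  rewrite /qlo /qhi hang -/th.
  have := cos_pihalf R => cp.
  case: (lerP th (pi/2)) => hth lt th'.
    left; have h1 := cos_noninc _ _ (le_trans th0 lt) th' pihalf_le.
    have h3 := cos_noninc _ _ th0 lt (le_trans th' pihalf_le).
    rewrite cp in h1; rewrite hcos in h3.
    apply/andP; split; first by rewrite mulr_ge0 // ltW.
    by rewrite hXc [c * r]mulrC ler_pM2l.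
  right; have h1 := cos_noninc _ _ pihalf_ge0 lt (le_trans th' thp).
  have h3 := cos_noninc _ _ (le_trans pihalf_ge0 lt) th' thp.
  rewrite cp in h1; rewrite hcos in h3.
  apply/andP; split; last by rewrite pmulr_rle0.
  by rewrite hXc [c * r]mulrC ler_pM2l.
Qed.
Lemma key_alg (ou ow ou' ow' Au Aw r r' ct st : R) : ct^+2 + st^+2 = 1 ->
  (Au-ou)^+2 + (Aw-ow)^+2 = r^+2 -> (Au-ou')^+2 + (Aw-ow')^+2 = r'^+2 -> ow' = ow ->
  ((ou + r*ct - ou')^+2 + (ow + r*st - ow')^+2 <= r'^+2) =
  ((ou'-ou)*(Au-ou) <= (ou'-ou)*(r*ct)).
Proof.
move=> hcs hr hr' e; subst ow'.
rewrite -[LHS]subr_ge0 -[RHS]subr_ge0 -hr'.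
have -> : (Au - ou') ^+ 2 + (Aw - ow) ^+ 2 - ((ou + r * ct - ou') ^+ 2 + (ow + r * st - ow) ^+ 2)
  = 2 * ((ou' - ou) * (r * ct) - (ou' - ou) * (Au - ou))
    + ((Au-ou)^+2 + (Aw-ow)^+2 - r^+2) + r^+2 * (1 - (ct^+2 + st^+2)) by ring.
by rewrite hr hcs !subrr mulr0 !addr0 pmulr_rge0.
Qed.

Lemma between_alg (D X z : R) : D*X <= 0 -> (0 <= z <= X) \/ (X <= z <= 0) -> D*X <= D*z.
Proof.
move=> h [/andP[h1 h2]|/andP[h1 h2]]; (have [hD|hD] := lerP D 0).
- have : 0 <= (- D) * (X - z) by apply: mulr_ge0; lra.
  lra.
- have hX : X <= 0 by rewrite -(pmulr_rle0 _ hD).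
  have -> : X = 0 by lra.
  have -> : z = 0 by lra.
  by [].
- have e1 : 0 <= D * X by rewrite mulr_le0 //; lra.
  have e2 : 0 <= D * z by rewrite mulr_le0 //; lra.
  lra.
- have : 0 <= D * (z - X) by apply: mulr_ge0; lra.
  lra.
Qed.

Lemma red_iff (O O' : disk R) (u w A : pt R) :
  dot u u = 1 -> dot w w = 1 -> dot u w = 0 -> 0 < dradius O -> 0 < dradius O' ->
  on_bd O A -> on_bd O' A -> 0 <= dot (psub A (dcenter O)) w ->
  dot (psub (dcenter O') (dcenter O)) w = 0 ->
  red O O' u w A <->
  dot (psub (dcenter O') (dcenter O)) u * dot (psub A (dcenter O)) u <= 0.
Proof.
move=> hu hw huw r0 r0' hA hA' hY hD.
have [hXY _ _ _ hbet] := disk_facts _ _ _ _ hu hw huw r0 hA hY.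
have hXY' := dist_eq_coord _ _ _ _ _ hu hw huw hA'.
have key : forall t, in_disk O' (arc_pt O u w t) <->
   dot (psub (dcenter O') (dcenter O)) u * dot (psub A (dcenter O)) u <=
   dot (psub (dcenter O') (dcenter O)) u * (dradius O * cos t).
  move=> t; rewrite /in_disk (dist_le_coord _ _ _ _ _ hu hw huw (ltW r0')).
  rewrite (arc_u _ _ _ _ hu huw) (arc_w _ _ _ _ hw huw) !dotBl.
  rewrite !dotBl in hXY hD.
  rewrite (key_alg _ _ _ _ _ _ _ _ _ _ (cos2Dsin2 t) hXY hXY'); first by [].
  by apply/eqP; rewrite -subr_eq0 hD.
split.
  move=> hr; have := hr (pi/2) (in_minmax _).
  by move/key; rewrite cos_pihalf mulr0 mulr0.
move=> h t ht; apply/key; apply: between_alg => //; exact: hbet.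
Qed.
Lemma H_alg (d D X1 X2 : R) : 0 < d -> (D = d \/ D = -d) -> X1 - X2 = D ->
  (if D * X1 <= 0 then - `|X1| else `|X1|) + (if - D * X2 <= 0 then - `|X2| else `|X2|) = d.
Proof.
move=> d0 hD hX.
have [x1|x1] := lerP 0 X1; [rewrite (ger0_norm x1)|rewrite (ltr0_norm x1)];
(have [x2|x2] := lerP 0 X2; [rewrite (ger0_norm x2)|rewrite (ltr0_norm x2)]);
(case: ifP => h1; case: ifP => h2);
try (move/negbT: h1; rewrite -ltNge => h1); try (move/negbT: h2; rewrite -ltNge => h2);
case: hD => hD; subst D; nra.
Qed.

Lemma V_alg (r1 r2 D X1 X2 Y : R) : 0 < r1 -> 0 < r2 -> 0 <= Y ->
  X1^+2 + Y^+2 = r1^+2 -> X2^+2 + Y^+2 = r2^+2 -> D != 0 -> X1 - X2 = D ->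
  `|r2 - r1| <= (if D * X1 <= 0 then - (r1 - Y) else r1 - Y) +
                (if - D * X2 <= 0 then - (r2 - Y) else r2 - Y).
Proof.
move=> r10 r20 hY h1 h2 hD hX.
have [Yr1 _] := sq_bounds _ _ _ r10 hY h1.
have [Yr2 _] := sq_bounds _ _ _ r20 hY h2.
have hr : r2^+2 - r1^+2 = D * D - 2 * (D * X1).
  by rewrite -h1 -h2 -hX; ring.
have hDD : 0 < D * D by rewrite -expr2 exprn_even_gt0 // hD orbT.
rewrite ler_norml.
case: ifP => b1; case: ifP => b2;
try (move/negbT: b1; rewrite -ltNge => b1); try (move/negbT: b2; rewrite -ltNge => b2);
apply/andP; split; nra.
Qed.

Lemma dotZl (k : R) (p q : pt R) : dot (pscale k p) q = k * dot p q.
Proof. by case: p => ? ?; case: q => ? ?; rewrite /dot /=; ring. Qed.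

Lemma contrib_eq (O O' : disk R) (u w A e : pt R) (x : R) :
  travel O u w A e = x%:E ->
  contrib O O' u w A e = (if `[< red O O' u w A >] then -x else x)%:E.
Proof. by rewrite /contrib => ->; case: ifP. Qed.

Lemma dot_ge0 (p : pt R) : 0 <= dot p p.
Proof. by case: p => a b; rewrite /dot /=; nra. Qed.
End H.
Arguments disk_facts {R}.
Arguments red_iff {R}.
Arguments H_alg {R}.
Arguments V_alg {R}.
Arguments contrib_eq {R}.
Arguments dot_ge0 {R}.
Arguments dotBl {R}.
Arguments dotZl {R}.
Arguments dotC {R}.

Theorem fact2 (R : realType) (n : nat) (O : nat -> disk R) (a b : nat -> pt R)
  (i : nat) (u w : pt R) :
  is_chain n O a b -> (2 <= i <= n)%N ->
  valid_frame (dcenter (O i.-1)) (dcenter (O i)) (a i.-1) u w ->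
  Hval (O i.-1) (O i) u w (a i.-1) = (pdist (dcenter (O i)) (dcenter (O i.-1)))%:E /\
  (`|dradius (O i) - dradius (O i.-1)|%:E <= Vval (O i.-1) (O i) u w (a i.-1))%E.
Proof.
move=> [hpos [hdist [hint _]]] /andP[i2 iN] [hu [hw [huw haw]]].
have hj : (1 <= i.-1 < n)%N by lia.
have eS : i.-1.+1 = i by lia.
have [_ [hA1 [hA2 _]]] := hint _ hj. rewrite eS in hA2.
have r1 := hpos i.-1 (ltac:(lia)).
have r2 := hpos i (ltac:(lia)).
have hneq : O i.-1 <> O i.
  by move=> e; have := hdist i.-1 i (ltac:(lia)) (ltac:(lia)) e; lia.
clear hint hpos hdist.
move: (O i.-1) (O i) (a i.-1) r1 r2 hneq hA1 hA2 hu haw => P Q A r1 r2 hneq hA1 hA2 hu haw.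
have [d hd] : exists d, pdist (dcenter Q) (dcenter P) = d by eexists.
rewrite hd in hu *.
have hv2 : dot (psub (dcenter Q) (dcenter P)) (psub (dcenter Q) (dcenter P)) = d ^+ 2.
  by rewrite -hd /pdist sqr_sqrtr // dot_ge0.
have d0 : 0 < d.
  rewrite lt_def -{2}hd sqrtr_ge0 andbT; apply/negP => /eqP dz.
  have ec : dcenter Q = dcenter P.
    move: hv2; rewrite dz; case: (dcenter Q) => q1 q2; case: (dcenter P) => p1 p2.
    rewrite /dot /= expr2 mulr0 => h.
    have s1 := sqr_ge0 (q1 - p1); have s2 := sqr_ge0 (q2 - p2).
    rewrite expr2 in s1; rewrite expr2 in s2.
    have e1 : (q1 - p1) * (q1 - p1) = 0 by lra.
    have e2 : (q2 - p2) * (q2 - p2) = 0 by lra.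
    move/eqP: e1; rewrite mulf_eq0 orbb => /eqP e1.
    move/eqP: e2; rewrite mulf_eq0 orbb => /eqP e2.
    by congr (_, _); lra.
  have er : dradius Q = dradius P by rewrite -hA1 -hA2 ec.
  have eD : forall D : disk R, D = Disk (dcenter D) (dradius D) by case.
  by apply: hneq; rewrite (eD P) (eD Q) ec er.
have [k [hk hku]] : exists k, (k = d^-1 \/ k = - d^-1) /\
    u = pscale k (psub (dcenter Q) (dcenter P)).
  by case: hu => ->; [exists d^-1 | exists (- d^-1)]; split => //; [left|right].
have hkd : k * d = 1 \/ k * d = -1.
  by case: hk => ->; [left|right]; rewrite ?mulNr mulVf // gt_eqF.
have hk0 : k != 0 by apply/eqP => k0; case: hkd; rewrite k0 mul0r; lra.
have huu : dot u u = 1.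
  rewrite hku dotZl dotC dotZl hv2.
  by case: hkd => e; [have -> : k * (k * d ^+ 2) = (k * d) * (k * d) by ring|
     have -> : k * (k * d ^+ 2) = (k * d) * (k * d) by ring]; rewrite e; lra.
have hvw : dot (psub (dcenter Q) (dcenter P)) w = 0.
  by move: huw; rewrite hku dotZl => /eqP; rewrite mulf_eq0 (negbTE hk0) => /eqP.
have hD : dot (psub (dcenter Q) (dcenter P)) u = d \/
          dot (psub (dcenter Q) (dcenter P)) u = - d.
  rewrite hku dotC dotZl hv2.
  have -> : k * d ^+ 2 = (k * d) * d by ring.
  by case: hkd => ->; [left|right]; ring.
have hYQ : dot (psub A (dcenter Q)) w = dot (psub A (dcenter P)) w.
  by move: hvw; rewrite !dotBl; lra.
have haw' : 0 <= dot (psub A (dcenter Q)) w by rewrite hYQ.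
have hvw' : dot (psub (dcenter P) (dcenter Q)) w = 0.
  by move: hvw; rewrite !dotBl; lra.
have hneg : dot (psub (dcenter P) (dcenter Q)) u = - dot (psub (dcenter Q) (dcenter P)) u.
  by rewrite !dotBl; ring.
have hX : dot (psub A (dcenter P)) u - dot (psub A (dcenter Q)) u =
          dot (psub (dcenter Q) (dcenter P)) u by rewrite !dotBl; ring.
have [hXY1 htu1 htw1 _ _] := disk_facts P u w A huu hw huw r1 hA1 haw.
have [hXY2 htu2 htw2 _ _] := disk_facts Q u w A huu hw huw r2 hA2 haw'.
have hb1 : `[< red P Q u w A >] = (dot (psub (dcenter Q) (dcenter P)) u *
                                   dot (psub A (dcenter P)) u <= 0).
  apply/idP/idP.
    by move/asboolP/(red_iff P Q u w A huu hw huw r1 r2 hA1 hA2 haw hvw).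
  by move/(red_iff P Q u w A huu hw huw r1 r2 hA1 hA2 haw hvw)/asboolP.
have hb2 : `[< red Q P u w A >] = (- dot (psub (dcenter Q) (dcenter P)) u *
                                   dot (psub A (dcenter Q)) u <= 0).
  rewrite -hneg; apply/idP/idP.
    by move/asboolP/(red_iff Q P u w A huu hw huw r2 r1 hA2 hA1 haw' hvw').
  by move/(red_iff Q P u w A huu hw huw r2 r1 hA2 hA1 haw' hvw')/asboolP.
split.
  rewrite /Hval (contrib_eq P Q u w A u _ htu1) (contrib_eq Q P u w A u _ htu2) hb1 hb2.
  by rewrite -EFinD; congr (_%:E); apply: H_alg.
rewrite /Vval (contrib_eq P Q u w A w _ htw1) (contrib_eq Q P u w A w _ htw2) hb1 hb2.
rewrite -EFinD lee_fin hYQ; apply: V_alg => //.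
  by rewrite -hYQ.
by case: hD => ->; rewrite ?oppr_eq0 gt_eqF.
Qed.
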